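(* Let $n\in\mathbb{N}$ and let $X_a,X_b,X_c\subset X$ be the subspaces defined below. Then every function in $X_a\oplus X_b$ is even with respect to $x=1/2$ if $n$ is even and odd with respect to $x=1/2$ if $n$ is odd; every function in $X_c$ is odd with respect to $x=1/2$ if $n$ is even and even with respect to $x=1/2$ if $n$ is odd.
   Context: Let $X=\{u\in H^2(0,1): u'(0)=u'(1)=0,\ \int_0^1u\,dx=0\}$. For $u\in X$ its extension $\tilde u:\mathbb{R}\to\mathbb{R}$ is the $2$-periodic function with $\tilde u(x)=u(x)$ for $0\le x\le 1$ and $\tilde u(x)=u(2-x)$ for $1<x<2$; it lies in $H^2_{per}(\mathbb{R})=\{v\in H^2_{loc}(\mathbb{R}): v(x+2)=v(x)\ \forall x,\ \int_0^2v\,dx=0\}$. On $W=H^2_{per}(\mathbb{R})$ define $(T_nv)(x)=-v(x+1/n)$ and $W_a=N(T_n-I)$, $W_b=N(T_n^{n-1}+\dots+T_n+I)$, $W_c=N(T_n^n+I)$. Define $X_\tau=\{u\in X:\tilde u\in W_\tau\}$ for $\tau\in\{a,b,c\}$; one has $X=X_a\oplus X_b\oplus X_c$. *)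

(* Defs.v *)
From mathcomp Require Import all_boot all_order all_algebra.
From mathcomp Require Import all_classical all_reals all_analysis.
Set Implicit Arguments. Unset Strict Implicit. Unset Printing Implicit Defensive.
Import Order.TTheory GRing.Theory Num.Theory.
Import numFieldNormedType.Exports.
Local Open Scope classical_set_scope.
Local Open Scope ring_scope.

Section Defs.
Variable R : realType.
Local Notation mu := (@lebesgue_measure R).

(* H^2(a,b) (a < b), via its standard description on an interval:
   u is C^1 on [a,b] with u' absolutely continuous and u'' in L^2(a,b), i.e.
   u(x) = u(a) + int_a^x du, du(x) = du(a) + int_a^x w, with w in L^2(a,b).
   Only the values of u on [a,b] matter. *)
Definition H2_on (a b : R) (u : R -> R) : Prop :=
  exists (du w : R -> R),
    mu.-integrable `[a, b] (fun x => ((w x) ^+ 2)%:E) /\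
    mu.-integrable `[a, b] (fun x => (w x)%:E) /\
    (forall x, a <= x <= b ->
       du x = du a + Rintegral mu `[a, x] w /\
       u x = u a + Rintegral mu `[a, x] du).

Definition Xsp (u : R -> R) : Prop :=
  H2_on 0 1 u /\
  (h^-1 * (u h - u 0) @[h --> 0^'+] --> 0) /\
  (h^-1 * (u (1 + h) - u 1) @[h --> 0^'-] --> 0) /\
  Rintegral mu `[0, 1] u = 0.

Definition Wsp (v : R -> R) : Prop :=
  (forall a b, a < b -> H2_on a b v) /\
  (forall x, v (x + 2) = v x) /\
  Rintegral mu `[0, 2] v = 0.

(* even 2-periodic extension *)
Definition ext (u : R -> R) (x : R) : R :=
  let y := x - 2 * (Num.floor (x / 2))%:~R in
  if y <= 1 then u y else u (2 - y).

Definition Tn (n : nat) (v : R -> R) : R -> R :=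
  fun x => - v (x + (n%:R)^-1).

Definition Wa (n : nat) (v : R -> R) : Prop :=
  Wsp v /\ forall x, Tn n v x - v x = 0.
Definition Wb (n : nat) (v : R -> R) : Prop :=
  Wsp v /\ forall x, \sum_(k < n) iter k (Tn n) v x = 0.
Definition Wc (n : nat) (v : R -> R) : Prop :=
  Wsp v /\ forall x, iter n (Tn n) v x + v x = 0.

Definition Xa (n : nat) (u : R -> R) : Prop := Xsp u /\ Wa n (ext u).
Definition Xb (n : nat) (u : R -> R) : Prop := Xsp u /\ Wb n (ext u).
Definition Xc (n : nat) (u : R -> R) : Prop := Xsp u /\ Wc n (ext u).

Definition even_half (u : R -> R) : Prop :=
  forall x, 0 <= x <= 1 -> u (1 - x) = u x.
Definition odd_half (u : R -> R) : Prop :=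
  forall x, 0 <= x <= 1 -> u (1 - x) = - u x.

End Defs.

(* Main.v *)
Require Import Defs.
From mathcomp Require Import all_boot all_order all_algebra.
From mathcomp Require Import all_classical all_reals all_analysis.
From mathcomp Require Import ring lra.
Import Order.TTheory GRing.Theory Num.Theory.
Local Open Scope ring_scope.

Lemma ext_in01 (R : realType) (u : R -> R) y : 0 <= y < 2 ->
  ext u y = if y <= 1 then u y else u (2 - y).
Proof.
move=> /andP[h0 h2]; rewrite /ext.
have -> : Num.floor (y / 2) = 0.
  apply/eqP; apply: negbNE; rewrite floor_neq0 negb_or -!leNgt -ltNge.
  apply/andP; split; first by rewrite divr_ge0.
  by rewrite ltr_pdivrMr // mul1r.
by rewrite mulr0 subr0.
Qed.

Lemma iter_Tn (R : realType) (n : nat) (v : R -> R) k x :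
  iter k (Tn n) v x = (-1) ^+ k * v (x + k%:R * (n%:R)^-1).
Proof.
elim: k x => [|k IH] x /=; first by rewrite mul1r mul0r addr0.
rewrite /Tn IH exprS mulN1r mulNr -addrA.
by rewrite -[in RHS](addn1 k) natrD mulrDl mul1r [_ + n%:R^-1]addrC.
Qed.

Lemma key (R : realType) (u : R -> R) (s : R) : s * s = 1 ->
  Wsp (ext u) -> (forall x, ext u (x + 1) = s * ext u x) -> odd_half u \/ True ->
  forall x, 0 <= x <= 1 -> u (1 - x) = s * u x.
Proof.
move=> ss [_ [per _]] sh _ x /andP[x0 x1].
have e1 : ext u (1 - x) = u (1 - x).
  rewrite ext_in01; last by apply/andP; split; lra.
  by rewrite ifT //; lra.
have e2 : ext u (2 - x) = u x.
  have [->|xp] := eqVneq x 0.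
    rewrite subr0 -(add0r 2) per ext_in01; last by apply/andP; split; lra.
    by rewrite ifT //; lra.
  have xp' : 0 < x by rewrite lt_neqAle eq_sym xp.
  rewrite ext_in01; last by apply/andP; split; lra.
  case: ifP => h.
    have -> : x = 1 by lra.
    by congr u; lra.
  by congr u; lra.
have := sh (1 - x); rewrite (_ : 1 - x + 1 = 2 - x); last by ring.
rewrite e1 e2 => ->; rewrite mulrA ss mul1r //.
Qed.

Lemma Tfix (R : realType) (n : nat) (hn : (0 < n)%N) (v : R -> R) c :
  (forall x, iter n (Tn n) v x = c * v x) ->
  forall x, v (x + 1) = ((-1) ^+ n * c) * v x.
Proof.
move=> H x; have := H x; rewrite iter_Tn divff ?pnatr_eq0 -?lt0n // => E.
by rewrite -mulrA -E mulrA -exprD addnn -mul2n exprM sqrrN !expr1n mul1r.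
Qed.

Lemma iter_fix (R : realType) (n : nat) (v : R -> R) :
  Tn n v = v -> forall k, iter k (Tn n) v = v.
Proof. by move=> E; elim=> //= k ->. Qed.

Lemma Wa_shift (R : realType) (n : nat) (hn : (0 < n)%N) (v : R -> R) :
  Wa n v -> forall x, v (x + 1) = (-1) ^+ n * v x.
Proof.
move=> [_ H]; rewrite -[(-1) ^+ n]mulr1; apply: Tfix => // x.
have E : Tn n v = v by apply/funext => y; apply/eqP; rewrite -subr_eq0 H.
by rewrite iter_fix // mul1r.
Qed.

Lemma Wb_shift (R : realType) (n : nat) (hn : (0 < n)%N) (v : R -> R) :
  Wb n v -> forall x, v (x + 1) = (-1) ^+ n * v x.
Proof.
move=> [_ H]; rewrite -[(-1) ^+ n]mulr1; apply: Tfix => // x.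
rewrite mul1r.
have H' := H (x + n%:R^-1).
have H2 : \sum_(k < n) iter k.+1 (Tn n) v x = 0.
  transitivity (- \sum_(k < n) iter k (Tn n) v (x + n%:R^-1)); last by rewrite H' oppr0.
  rewrite -sumrN; apply: eq_bigr => k _ /=; by rewrite /Tn.
case: n hn H H' H2 => // m _ H _ H2.
have := H x; rewrite big_ord_recl /= => E1.
move: H2; rewrite big_ord_recr /= => E2.
have S : \sum_(i < m) Tn m.+1 (iter (0 + i) (Tn m.+1) v) x = \sum_(i < m) Tn m.+1 (iter i (Tn m.+1) v) x by apply: eq_bigr => i _; rewrite add0n.
move: E1 E2; rewrite S; set a := \sum_(i < m) _; set b := Tn _ _ _; lra.
Qed.

Lemma Wc_shift (R : realType) (n : nat) (hn : (0 < n)%N) (v : R -> R) :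
  Wc n v -> forall x, v (x + 1) = (-1) ^+ n * (-1) * v x.
Proof.
move=> [_ H]; apply: Tfix => // x.
by apply/eqP; rewrite mulN1r -subr_eq0 opprK H.
Qed.

Theorem lemma2p8 (R : realType) (n : nat) (hn : (0 < n)%N) :
  (forall ua ub : R -> R, Xa n ua -> Xb n ub ->
     let u := fun x => ua x + ub x in
     if odd n then odd_half u else even_half u) /\
  (forall u : R -> R, Xc n u ->
     if odd n then even_half u else odd_half u).
Proof.
have ss : (-1) ^+ n * (-1) ^+ n = 1 :> R by rewrite -exprD addnn -mul2n exprM sqrrN !expr1n.
have ss' : (-1) ^+ n * (-1) * ((-1) ^+ n * (-1)) = 1 :> R.
  by rewrite mulrACA ss mulN1r opprK mul1r.
split.
- move=> ua ub [_ Ha] [_ Hb] u.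
  have ka := @key _ _ _ ss (proj1 Ha) (@Wa_shift _ _ hn _ Ha) (or_intror I).
  have kb := @key _ _ _ ss (proj1 Hb) (@Wb_shift _ _ hn _ Hb) (or_intror I).
  rewrite -signr_odd in ka kb.
  case: (odd n) ka kb => /= ka kb x hx; rewrite /u ka // kb //; ring.
- move=> u [_ Hc].
  have kc := @key _ _ _ ss' (proj1 Hc) (@Wc_shift _ _ hn _ Hc) (or_intror I).
  rewrite -signr_odd in kc.
  case: (odd n) kc => /= kc x hx; rewrite kc //; ring.
Qed.
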